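(* Let $\mathcal{A}\in\mathbb{R}^{n\times n\times n\times n}$ be a real CPS tensor that is not symmetric. Then $\mathcal{A}$ has a CPS decomposition of the form \[ \mathcal{A}=\sum_{i=1}^{R_1}\lambda_i\big(a_i\otimes a_i\otimes\bar a_i\otimes\bar a_i+\bar a_i\otimes\bar a_i\otimes a_i\otimes a_i\big)+\sum_{j=1}^{R_2}\mu_j\, b_j\otimes b_j\otimes b_j\otimes b_j, \] where $\lambda_i,\mu_j\in\mathbb{R}$, $a_i\in\mathbb{C}^n\setminus\mathbb{R}^n$ and $b_j\in\mathbb{R}^n$.
   Context: A tensor $\mathcal{A}\in\mathbb{C}^{n\times n\times n\times n}$ is conjugate partial-symmetric (CPS) if $\mathcal{A}_{ijkl}=\overline{\mathcal{A}_{klij}}$ and $\mathcal{A}_{ijkl}=\mathcal{A}_{jikl}=\mathcal{A}_{ijlk}$ for all indices; a real CPS tensor has real entries. A tensor is symmetric if its entries are invariant under all permutations of the four indices. A CPS decomposition is a representation $\sum_i\lambda_i a_i\otimes a_i\otimes\bar a_i\otimes\bar a_i$ with $\lambda_i\in\mathbb{R}$, $a_i\in\mathbb{C}^n$. *)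

(* Defs.v *)
From HB Require Import structures.
From mathcomp Require Import all_boot all_order all_algebra all_fingroup.
From mathcomp Require Import complex.
From mathcomp Require Import reals.
Set Implicit Arguments. Unset Strict Implicit. Unset Printing Implicit Defensive.
Import Order.TTheory GRing.Theory Num.Theory.
Local Open Scope ring_scope.

Definition tensor4 (T : Type) (n : nat) := 'I_n -> 'I_n -> 'I_n -> 'I_n -> T.

Section Defs.
Variable R : rcfType.
Variable n : nat.

Definition is_CPS (A : tensor4 R[i] n) : Prop :=
  forall i j k l,
    A i j k l = conjc (A k l i j) /\ A i j k l = A j i k l /\ A i j k l = A i j l k.

Definition is_real_tensor (A : tensor4 R[i] n) : Prop :=
  forall i j k l, Im (A i j k l) = 0.

Definition is_symmetric (A : tensor4 R[i] n) : Prop :=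
  forall (s : 'S_4) (i j k l : 'I_n),
    let t := [tuple i; j; k; l] in
    A i j k l = A (tnth t (s (inord 0))) (tnth t (s (inord 1)))
                  (tnth t (s (inord 2))) (tnth t (s (inord 3))).

Definition is_real_vec (a : 'I_n -> R[i]) : Prop := forall k, Im (a k) = 0.

Definition conjv (a : 'I_n -> R[i]) : 'I_n -> R[i] := fun k => conjc (a k).

Definition outer4 (a b c d : 'I_n -> R[i]) : tensor4 R[i] n :=
  fun i j k l => a i * b j * c k * d l.

End Defs.

(* Main.v *)
Require Import Defs.
From HB Require Import structures.
From mathcomp Require Import all_boot all_order all_algebra all_fingroup.
From mathcomp Require Import complex.
From mathcomp Require Import reals.
From mathcomp Require Import ring.
Import Order.TTheory GRing.Theory Num.Theory.
Local Open Scope ring_scope.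
Set Implicit Arguments. Unset Strict Implicit.

Section S.
Variable R : realType.
Variable n : nat.
Local Notation C := (R[i]).
Local Notation T4 := (tensor4 C n).

Definition rep (A : T4) := exists (R1 R2 : nat) (lam : 'I_R1 -> R) (a : 'I_R1 -> 'I_n -> R[i])
         (mu : 'I_R2 -> R) (b : 'I_R2 -> 'I_n -> R),
    (forall r, ~ is_real_vec (a r)) /\
    (forall i j k l : 'I_n,
      A i j k l =
        \sum_(r < R1) ((lam r)%:C)%C *
            (outer4 (a r) (a r) (conjv (a r)) (conjv (a r)) i j k l
             + outer4 (conjv (a r)) (conjv (a r)) (a r) (a r) i j k l)
      + \sum_(s < R2) ((mu s)%:C)%C *
            outer4 (fun t => ((b s t)%:C)%C) (fun t => ((b s t)%:C)%C)
                   (fun t => ((b s t)%:C)%C) (fun t => ((b s t)%:C)%C) i j k l).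

Lemma rep_ext (A B : T4) : rep A -> (forall i j k l, B i j k l = A i j k l) -> rep B.
Proof.
move=> [R1 [R2 [lam [a [mu [b [Ha HA]]]]]]] E.
exists R1, R2, lam, a, mu, b; split=> // i j k l; by rewrite E HA.
Qed.

Lemma rep0 : rep (fun _ _ _ _ => 0).
Proof.
exists 0%N, 0%N, (fun _ => 0), (fun _ _ => 0), (fun _ => 0), (fun _ _ => 0); split.
  by case.
by move=> *; rewrite !big_ord0 addr0.
Qed.

Lemma rep_add (A B : T4) : rep A -> rep B -> rep (fun i j k l => A i j k l + B i j k l).
Proof.
move=> [R1 [R2 [lam [a [mu [b [Ha HA]]]]]]] [R1' [R2' [lam' [a' [mu' [b' [Ha' HA']]]]]]].
pose sp (X : Type) m m' (f : 'I_m -> X) (g : 'I_m' -> X) (r : 'I_(m + m')) :=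
  match split r with inl x => f x | inr y => g y end.
exists (R1 + R1')%N, (R2 + R2')%N, (sp _ _ _ lam lam'), (sp _ _ _ a a'),
  (sp _ _ _ mu mu'), (sp _ _ _ b b'); split.
  by move=> r; rewrite /sp; case: (split r).
move=> i j k l; rewrite HA HA' !big_split_ord /sp.
have sl m m' (x : 'I_m) : split (lshift m' x) = inl x := unsplitK (inl x).
have sr m m' (x : 'I_m') : split (rshift m x) = inr x := unsplitK (inr x).
under eq_bigr do rewrite sl.
under [X in _ = _ + _ + (X + _)]eq_bigr do rewrite sl.
under [X in _ = _ + _ + (_ + X)]eq_bigr do rewrite sr.
under [X in _ = _ + X + _]eq_bigr do rewrite sr.
rewrite /=; ring.
Qed.

Lemma repZ (c : R) (A : T4) : rep A -> rep (fun i j k l => (c%:C)%C * A i j k l).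
Proof.
move=> [R1 [R2 [lam [a [mu [b [Ha HA]]]]]]].
exists R1, R2, (fun r => c * lam r), a, (fun r => c * mu r), b; split=> // i j k l.
rewrite HA mulrDr !mulr_sumr; congr (_ + _); apply: eq_bigr => r _; by rewrite rmorphM /= mulrA.
Qed.

Lemma rep_sumR (X : Type) (s : seq X) (F : X -> 'I_n -> 'I_n -> 'I_n -> 'I_n -> R) :
  (forall x, rep (fun i j k l => ((F x i j k l)%:C)%C)) ->
  rep (fun i j k l => ((\sum_(x <- s) F x i j k l)%:C)%C).
Proof.
move=> H; elim: s => [|x s IH].
  refine (rep_ext rep0 _) => i j k l; by rewrite big_nil.
refine (rep_ext (rep_add (H x) IH) _) => i j k l; by rewrite big_cons rmorphD.
Qed.

Lemma repB (c : R) (b : 'I_n -> R) :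
  rep (fun i j k l => (c%:C)%C * outer4 (fun t => ((b t)%:C)%C) (fun t => ((b t)%:C)%C)
                   (fun t => ((b t)%:C)%C) (fun t => ((b t)%:C)%C) i j k l).
Proof.
exists 0%N, 1%N, (fun _ => 0), (fun _ _ => 0), (fun _ => c), (fun _ => b); split.
  by case.
by move=> *; rewrite big_ord0 big_ord1 add0r.
Qed.

Lemma NumIm0 (z : C) : Num.Theory.Im z = 0 -> complex.Im z = 0.
Proof.
move/Creal_ImP; rewrite realE !lecE /=.
by case/orP => /andP [/eqP h _].
Qed.

Lemma NumIm0' (z : C) : complex.Im z = 0 -> Num.Theory.Im z = 0.
Proof.
move=> h; apply/Creal_ImP; rewrite realE !lecE /= h eqxx /=.
by rewrite le_total.
Qed.

Lemma repK (c : R) (a : 'I_n -> C) :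
  rep (fun i j k l => (c%:C)%C * (outer4 a a (conjv a) (conjv a) i j k l
             + outer4 (conjv a) (conjv a) a a i j k l)).
Proof.
case: (boolP [forall t, complex.Im (a t) == 0]) => H.
  have ha t : a t = ((complex.Re (a t))%:C)%C.
    by move/forallP: H => /(_ t) /eqP; case: (a t) => x y /= ->.
  refine (rep_ext (repB (2 * c) (fun t => complex.Re (a t))) _) => i j k l.
  rewrite /outer4 /conjv (ha i) (ha j) (ha k) (ha l) !conjc_real rmorphM /= rmorph_nat.
  ring.
exists 1%N, 0%N, (fun _ => c), (fun _ => a), (fun _ => 0), (fun _ _ => 0); split.
  move=> r hr; move/negP: H; apply; apply/forallP => t; apply/eqP; exact: NumIm0 (hr t).
by move=> *; rewrite big_ord0 big_ord1 addr0.
Qed.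

Lemma repG (c : R) (u w : 'I_n -> R) :
  rep (fun p q r s => ((c * (u p * u q * w r * w s + w p * w q * u r * u s))%:C)%C).
Proof.
pose d := c / 4.
have hc : c = d * 4 by rewrite /d mulfVK // pnatr_eq0.
have := rep_add (rep_add (repB d (fun t => u t + w t)) (repB d (fun t => u t - w t)))
   (repK (- d) (fun t => ((u t)%:C)%C + 'i%C * ((w t)%:C)%C)).
move=> H; refine (rep_ext H _) => p q r s.
rewrite hc /outer4 /conjv /=.
simpc.
rewrite -complexr0; congr (Complex _ _); ring.
Qed.

Definition del (i p : 'I_n) : R := (i == p)%:R.
Definition Gt (u w : 'I_n -> R) (p q r s : 'I_n) := u p * u q * w r * w s + w p * w q * u r * u s.

Lemma sum_del (G : 'I_n -> R) a : \sum_i G i * del i a = G a.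
Proof.
rewrite (bigD1 a) //= big1 => [|i /negbTE ia]; first by rewrite /del eqxx mulr1 addr0.
by rewrite /del ia mulr0.
Qed.

Lemma delta4 (F : 'I_n -> 'I_n -> 'I_n -> 'I_n -> R) a b c d :
  \sum_i \sum_j \sum_k \sum_l F i j k l * (del i a * del j b * del k c * del l d) = F a b c d.
Proof.
rewrite -(sum_del (fun i => F i b c d) a); apply: eq_bigr => i _.
rewrite -(sum_del (fun j => F i j c d * del i a) b); apply: eq_bigr => j _.
rewrite -(sum_del (fun k => F i j k d * del i a * del j b) c); apply: eq_bigr => k _.
rewrite -(sum_del (fun l => F i j k l * del i a * del j b * del k c) d); apply: eq_bigr => l _.
ring.
Qed.

Definition Dsum (i j k l p q r s : 'I_n) : R :=
  del i p * del j q * del k r * del l s + del i q * del j p * del k r * del l s +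
  del i p * del j q * del k s * del l r + del i q * del j p * del k s * del l r +
  del i r * del j s * del k p * del l q + del i s * del j r * del k p * del l q +
  del i r * del j s * del k q * del l p + del i s * del j r * del k q * del l p.

Lemma inner (c : R) (i j k l p q r s : 'I_n) :
  \sum_(x <- [:: 1; -1]) \sum_(y <- [:: 1; -1])
     (c * x * y / 32) * Gt (fun t => del i t + x * del j t) (fun t => del k t + y * del l t) p q r s
  = c * (8^-1 * Dsum i j k l p q r s).
Proof.
rewrite !big_cons !big_nil /Gt /Dsum.
field; do ?split; by rewrite pnatr_eq0.
Qed.

Lemma sum8 (F : 'I_n -> 'I_n -> 'I_n -> 'I_n -> R) p q r s :
  \sum_i \sum_j \sum_k \sum_l F i j k l * (8^-1 * Dsum i j k l p q r s) =
  8^-1 * (F p q r s + F q p r s + F p q s r + F q p s r + F r s p q + F s r p q + F r s q p + F s r q p).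
Proof.
rewrite -(delta4 F p q r s) -(delta4 F q p r s) -(delta4 F p q s r) -(delta4 F q p s r).
rewrite -(delta4 F r s p q) -(delta4 F s r p q) -(delta4 F r s q p) -(delta4 F s r q p).
rewrite -!big_split mulr_sumr; apply: eq_bigr => i _.
rewrite -!big_split mulr_sumr; apply: eq_bigr => j _.
rewrite -!big_split mulr_sumr; apply: eq_bigr => k _.
rewrite -!big_split mulr_sumr; apply: eq_bigr => l _.
rewrite /Dsum /=; ring.
Qed.

End S.

Theorem corollary4p5 (R : realType) (n : nat) (A : tensor4 R[i] n) :
  is_real_tensor A -> is_CPS A -> ~ is_symmetric A ->
  exists (R1 R2 : nat) (lam : 'I_R1 -> R) (a : 'I_R1 -> 'I_n -> R[i])
         (mu : 'I_R2 -> R) (b : 'I_R2 -> 'I_n -> R),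
    (forall r, ~ is_real_vec (a r)) /\
    (forall i j k l : 'I_n,
      A i j k l =
        \sum_(r < R1) ((lam r)%:C)%C *
            (outer4 (a r) (a r) (conjv (a r)) (conjv (a r)) i j k l
             + outer4 (conjv (a r)) (conjv (a r)) (a r) (a r) i j k l)
      + \sum_(s < R2) ((mu s)%:C)%C *
            outer4 (fun t => ((b s t)%:C)%C) (fun t => ((b s t)%:C)%C)
                   (fun t => ((b s t)%:C)%C) (fun t => ((b s t)%:C)%C) i j k l).
Proof.
move=> Hr Hc _.
pose Ar i j k l := complex.Re (A i j k l).
have hA i j k l : A i j k l = ((Ar i j k l)%:C)%C.
  by have := NumIm0 (Hr i j k l); rewrite /Ar; case: (A i j k l) => x y /= ->.
have s1 i j k l : Ar j i k l = Ar i j k l by rewrite /Ar (Hc i j k l).2.1.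
have s2 i j k l : Ar i j l k = Ar i j k l by rewrite /Ar (Hc i j k l).2.2.
have s3 i j k l : Ar k l i j = Ar i j k l.
  by rewrite /Ar (Hc i j k l).1; case: (A k l i j).
suff: rep (fun p q r s => A p q r s) by [].
pose T p q r s := ((\sum_(i < n) \sum_(j < n) \sum_(k < n) \sum_(l < n)
   \sum_(x <- [:: 1; -1]) \sum_(y <- [:: 1; -1])
     Ar i j k l * x * y / 32 * Gt (fun t => del R i t + x * del R j t) (fun t => del R k t + y * del R l t) p q r s)%:C)%C.
have HT : rep T.
  apply: rep_sumR => i; apply: rep_sumR => j; apply: rep_sumR => k; apply: rep_sumR => l.
  apply: rep_sumR => x; apply: rep_sumR => y.
  exact: (repG (Ar i j k l * x * y / 32) (fun t => del R i t + x * del R j t) (fun t => del R k t + y * del R l t)).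
refine (rep_ext HT _) => p q r s.
suff E : Ar p q r s = \sum_(i < n) \sum_(j < n) \sum_(k < n) \sum_(l < n)
   \sum_(x <- [:: 1; -1]) \sum_(y <- [:: 1; -1])
     Ar i j k l * x * y / 32 * Gt (fun t => del R i t + x * del R j t) (fun t => del R k t + y * del R l t) p q r s.
  by rewrite hA E.
under eq_bigr => i _ do under eq_bigr => j _ do under eq_bigr => k _ do under eq_bigr => l _ do rewrite inner.
rewrite sum8.
have e4 : Ar r s p q = Ar p q r s := s3 p q r s.
have e5 : Ar s r p q = Ar p q r s by rewrite (s1 r s p q).
have e6 : Ar r s q p = Ar p q r s by rewrite (s2 r s p q).
have e7 : Ar s r q p = Ar p q r s by rewrite (s2 s r p q).
rewrite e4 e5 e6 e7 (s2 q p r s) (s1 p q r s) (s2 p q r s).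
by field.
Qed.
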